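(* Let $A$ be a Gorenstein local ring of dimension zero with maximal ideal $M$ and exponent $t+1$, and let $v$ generate the socle: $0:M=M^t=vA$. (i) Let $0\subsetneq I_1\subsetneq\cdots\subsetneq I_t=M$ be a strict chain of Gorenstein ideals of length $t$, and let $v=d_t\cdots d_1$ be a factorization of $v$ with $I_i=0:(d_i\cdots d_1)A$ for $1\le i\le t$. Then each $d_i$ lies in $M\setminus M^2$ and $\mathrm{exponent}(A/I_i)=\mathrm{exponent}(A)-i$. In particular $I_1$ is the annihilator of a minimal generator of $M$ and $\mathrm{exponent}(A/I_1)=\mathrm{exponent}(A)-1$. (ii)(a) If $I$ is a Gorenstein ideal of $A$ with $\mathrm{exponent}(A/I)=\mathrm{exponent}(A)-1$, then the principal ideal $0:I$ is generated by an element $y\in M\setminus M^2$. (b) If $A$ is positively graded with its maximal ideal generated by homogeneous elements of degree $1$ and its degree-zero homogeneous elements forming a field, and $y$ is a homogeneous minimal generator of $M$, then $\mathrm{exponent}(A/(0:yA))=\mathrm{exponent}(A)-1$.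
   Context: The exponent of an artinian local ring with maximal ideal $M$ is $\min\{r\in\mathbb N: M^r=0\}$. A Gorenstein ideal of a local ring $A$ is a proper ideal $I$ such that $A/I$ is Gorenstein. *)

(* Defs.v *)
From HB Require Import structures.
From mathcomp Require Import all_boot all_order all_algebra.
Set Implicit Arguments. Unset Strict Implicit. Unset Printing Implicit Defensive.
Import Order.TTheory GRing.Theory Num.Theory.
Local Open Scope ring_scope.

Section CommAlg.
Variable A : comNzRingType.

Definition ideal (I : A -> Prop) : Prop :=
  I 0 /\ (forall x y, I x -> I y -> I (x + y)) /\ (forall a x, I x -> I (a * x)).

Definition gen_by (S : A -> Prop) (z : A) : Prop :=
  exists l : seq (A * A), (forall p, p \in l -> S p.2) /\ z = \sum_(p <- l) p.1 * p.2.

Definition principal (x : A) (z : A) : Prop := exists a, z = a * x.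

Definition prod_ideal (I J : A -> Prop) (z : A) : Prop :=
  exists l : seq (A * A), (forall p, p \in l -> I p.1 /\ J p.2) /\
    z = \sum_(p <- l) p.1 * p.2.

Fixpoint ideal_pow (M : A -> Prop) (n : nat) : A -> Prop :=
  match n with
  | 0 => fun _ => True
  | n'.+1 => prod_ideal M (ideal_pow M n')
  end.

Definition ann_ideal (I : A -> Prop) (z : A) : Prop := forall x, I x -> z * x = 0.

Definition noetherian : Prop :=
  forall I, ideal I -> exists s : seq A, forall z, I z <-> gen_by (fun x => x \in s) z.

Definition local_ring (M : A -> Prop) : Prop :=
  ideal M /\ ~ M 1 /\ (forall x, ~ M x -> exists y, x * y = 1).

Definition is_exponent (M : A -> Prop) (e : nat) : Prop :=
  (forall z, ideal_pow M e z -> z = 0) /\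
  (forall r, (forall z, ideal_pow M r z -> z = 0) -> (e <= r)%N).

(* zero-dimensional Gorenstein local ring with maximal ideal M:
   noetherian local, M nilpotent (dimension zero), and socle 0:M simple,
   i.e. a nonzero principal ideal (= one-dimensional over A/M). *)
Definition gorenstein0 (M : A -> Prop) : Prop :=
  noetherian /\ local_ring M /\ (exists r, forall z, ideal_pow M r z -> z = 0) /\
  exists x, x != 0 /\ forall z, ann_ideal M z <-> principal x z.

Definition minimal_generator (M : A -> Prop) (y : A) : Prop :=
  exists s : seq A, y \in s /\ (forall z, M z <-> gen_by (fun x => x \in s) z) /\
    forall i, (i < size s)%N ->
      ~ (forall z, M z <-> gen_by (fun x => x \in take i s ++ drop i.+1 s) z).

Definition graded (G : nat -> A -> Prop) : Prop :=
  (forall n, G n 0) /\ (forall n x y, G n x -> G n y -> G n (x + y)) /\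
  (forall n x, G n x -> G n (- x)) /\
  (forall m n x y, G m x -> G n y -> G (m + n)%N (x * y)) /\
  (forall z, exists (N : nat) (c : nat -> A), (forall i, G i (c i)) /\ z = \sum_(i < N) c i) /\
  (forall (N : nat) (c : nat -> A), (forall i, G i (c i)) -> \sum_(i < N) c i = 0 ->
     forall i, (i < N)%N -> c i = 0).

End CommAlg.

Definition is_quotient (A B : comNzRingType) (f : {rmorphism A -> B}) (I : A -> Prop) : Prop :=
  (forall b, exists a, f a = b) /\ (forall a, f a = 0 <-> I a).

Definition gorenstein_ideal (A : comNzRingType) (I : A -> Prop) : Prop :=
  ideal I /\ ~ I 1 /\
  exists (B : comNzRingType) (f : {rmorphism A -> B}) (MB : B -> Prop),
    is_quotient f I /\ gorenstein0 MB.

Definition quot_exponent (A : comNzRingType) (I : A -> Prop) (e : nat) : Prop :=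
  exists (B : comNzRingType) (f : {rmorphism A -> B}) (MB : B -> Prop),
    is_quotient f I /\ local_ring MB /\ is_exponent MB e.

(* Main.v *)
Require Import Defs.
From HB Require Import structures.
From mathcomp Require Import all_boot all_order all_algebra ring.
From Stdlib Require Import ClassicalEpsilon Classical FunctionalExtensionality PropExtensionality.
From mathcomp Require Import generic_quotient ring_quotient.
Import GRing.Theory.
Local Open Scope ring_scope.
Set Implicit Arguments. Unset Strict Implicit.

Lemma pext (T : Type) (P Q : T -> Prop) : (forall z, P z <-> Q z) -> P = Q.
Proof. move=> h; apply: functional_extensionality => z; apply: propositional_extensionality; exact: h. Qed.

Section Basic.
Variable A : comNzRingType.
Implicit Types (I J K C D E F S : A -> Prop).

Definition sub I J := forall z, I z -> J z.

Lemma ideal0 I : ideal I -> I 0. Proof. by case. Qed.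
Lemma idealD I : ideal I -> forall x y, I x -> I y -> I (x + y). Proof. by case=> _ []. Qed.
Lemma idealM I : ideal I -> forall a x, I x -> I (a * x). Proof. by case=> _ []. Qed.
Lemma idealMr I : ideal I -> forall a x, I x -> I (x * a). Proof. by move=> hI a x hx; rewrite mulrC; apply: idealM. Qed.
Lemma idealN I : ideal I -> forall x, I x -> I (- x).
Proof. by move=> hI x hx; rewrite -mulN1r; apply: idealM. Qed.
Lemma idealB I : ideal I -> forall x y, I x -> I y -> I (x - y).
Proof. by move=> hI x y hx hy; apply: idealD => //; apply: idealN. Qed.

Lemma ideal_sum I (T : eqType) (l : seq T) (Fn : T -> A) :
  ideal I -> (forall p, p \in l -> I (Fn p)) -> I (\sum_(p <- l) Fn p).
Proof.
move=> hI; elim: l => [|p l IH] h; first by rewrite big_nil; apply: ideal0.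
rewrite big_cons; apply: idealD => //; first by apply: h; rewrite inE eqxx.
by apply: IH => q hq; apply: h; rewrite inE hq orbT.
Qed.

Lemma ideal_sum_cond I (T : eqType) (l : seq T) (P : pred T) (Fn : T -> A) :
  ideal I -> (forall p, p \in l -> P p -> I (Fn p)) -> I (\sum_(p <- l | P p) Fn p).
Proof.
move=> hI h; rewrite -big_filter; apply: ideal_sum => // p.
by rewrite mem_filter => /andP [hp hl]; apply: h.
Qed.

Lemma prod_ideal_ideal I J : ideal J -> ideal (prod_ideal I J).
Proof.
move=> hJ; split; [|split].
- by exists [::]; rewrite big_nil.
- move=> x y [l1 [h1 ->]] [l2 [h2 ->]]; exists (l1 ++ l2); split; last by rewrite big_cat.
  by move=> p; rewrite mem_cat => /orP [] ?; [apply: h1|apply: h2].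
- move=> a x [l [h ->]]; exists [seq (p.1, a * p.2) | p <- l]; split.
  + move=> q /mapP [p hp ->] /=; have [h1 h2] := h p hp; split => //; exact: idealM.
  + by rewrite big_map mulr_sumr; apply: eq_bigr => p _ /=; rewrite mulrCA.
Qed.

Lemma prod_ideal1 I J x y : I x -> J y -> prod_ideal I J (x * y).
Proof. by move=> hx hy; exists [:: (x, y)]; split; [move=> p; rewrite inE => /eqP -> | rewrite big_seq1]. Qed.

Lemma prod_ideal_sub I J I' J' : sub I I' -> sub J J' -> sub (prod_ideal I J) (prod_ideal I' J').
Proof. by move=> hI hJ z [l [h ->]]; exists l; split => // p /h [] /hI ? /hJ. Qed.

Lemma gen_ideal S : ideal (gen_by S).
Proof.
split; [|split].
- by exists [::]; rewrite big_nil.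
- move=> x y [l1 [h1 ->]] [l2 [h2 ->]]; exists (l1 ++ l2); split; last by rewrite big_cat.
  by move=> p; rewrite mem_cat => /orP [] ?; [apply: h1|apply: h2].
- move=> a x [l [h ->]]; exists [seq (a * p.1, p.2) | p <- l]; split.
  + by move=> q /mapP [p hp ->] /=; apply: h.
  + by rewrite big_map mulr_sumr; apply: eq_bigr => p _ /=; rewrite mulrA.
Qed.

Lemma gen1 (S : A -> Prop) x : S x -> gen_by S x.
Proof. by move=> hx; exists [:: (1, x)]; split; [move=> p; rewrite inE => /eqP -> | rewrite big_seq1 mul1r]. Qed.

Lemma gen_sub (S : A -> Prop) I : ideal I -> sub S I -> sub (gen_by S) I.
Proof. move=> hI hS z [l [h ->]]; apply: ideal_sum => // p hp; apply: (idealM hI); apply: hS; exact: h. Qed.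

Lemma gen_mono (S S' : A -> Prop) : sub S S' -> sub (gen_by S) (gen_by S').
Proof. move=> h z [l [hl ->]]; exists l; split => //; move=> p hp; apply: h; exact: hl. Qed.

Lemma principal_ann (x z : A) : ann_ideal (principal x) z <-> z * x = 0.
Proof.
split; first by move=> h; apply: h; exists 1; rewrite mul1r.
by move=> h w [a ->]; rewrite mulrCA h mulr0.
Qed.

Lemma principal_ideal (x : A) : ideal (principal x).
Proof.
split; [|split]; first by exists 0; rewrite mul0r.
- by move=> a b [c ->] [d ->]; exists (c + d); rewrite mulrDl.
- by move=> a b [c ->]; exists (a * c); rewrite mulrA.
Qed.

Lemma ann_ideal_ideal I : ideal (ann_ideal I).
Proof.
split; [|split]; first by move=> x _; rewrite mul0r.
- by move=> a b ha hb x hx; rewrite mulrDl ha ?hb ?addr0.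
- by move=> a b hb x hx; rewrite -mulrA hb ?mulr0.
Qed.

End Basic.

Section Q.
Local Open Scope quotient_scope.
Variables (A : comNzRingType) (I : A -> Prop).
Hypothesis hI : ideal I.
Hypothesis I1 : ~ I 1.

Definition Ib (a : A) : bool := if excluded_middle_informative (I a) then true else false.
Lemma IbP a : Ib a = true <-> I a.
Proof. rewrite /Ib; case: excluded_middle_informative => //. Qed.

Lemma Ib_closed : idealr_closed Ib.
Proof.
split.
- by apply/IbP; apply: ideal0.
- by apply/negP => /IbP.
- move=> a u w /IbP hu /IbP hw; apply/IbP; apply: idealD => //; exact: idealM.
Qed.

HB.instance Definition _ := isIdealr.Build A Ib Ib_closed.

Definition QB : comNzRingType := {ideal_quot (Ib : idealr A)}.
Definition qf : {rmorphism A -> QB} := \pi_QB.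

Lemma qf_quot : is_quotient qf I.
Proof.
split.
- move=> b; exists (repr b); exact: reprK.
- move=> a; split.
  + move=> /eqP. rewrite -(rmorph0 qf) /qf. rewrite -Quotient.idealrBE subr0 => /IbP //.
  + move=> Ia; apply/eqP; rewrite -(rmorph0 qf) /qf -Quotient.idealrBE subr0; apply/IbP => //.
Qed.
End Q.

Lemma quot_exists (A : comNzRingType) (I : A -> Prop) : ideal I -> ~ I 1 ->
  exists (B : comNzRingType) (f : {rmorphism A -> B}), is_quotient f I.
Proof. move=> hI hI1; exists (QB hI hI1), (qf hI hI1); exact: qf_quot. Qed.

Lemma ideal_zero (A : comNzRingType) : ideal (fun z : A => z = 0).
Proof. split; [|split] => //; first by move=> x y -> ->; rewrite addr0. by move=> a x ->; rewrite mulr0. Qed.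

Lemma ideal_top (A : comNzRingType) : ideal (fun z : A => True).
Proof. by []. Qed.

Section Loc.
Variable A : comNzRingType.
Variable M : A -> Prop.
Hypothesis HMi : ideal M.
Hypothesis HM1 : ~ M 1.
Hypothesis HMu : forall x, ~ M x -> exists y, x * y = 1.
Implicit Types (I J K C D E F S : A -> Prop).
Local Notation pw := (ideal_pow M).

Lemma pw_ideal n : ideal (pw n).
Proof. elim: n => [|n IH] /=; first exact: ideal_top. exact: prod_ideal_ideal. Qed.

Lemma pw_S n x y : M x -> pw n y -> pw n.+1 (x * y).
Proof. exact: prod_ideal1. Qed.

Lemma pw_Sr n x y : pw n y -> M x -> pw n.+1 (y * x).
Proof. by move=> h1 h2; rewrite mulrC; apply: pw_S. Qed.

Lemma pw1 z : M z <-> pw 1 z.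
Proof.
split; first by move=> h; rewrite -[z]mulr1; apply: pw_S.
move=> [l [h ->]]; apply: ideal_sum => // p /h [h1 _]; exact: idealMr.
Qed.

Lemma pw_mul a b x y : pw a x -> pw b y -> pw (a + b) (x * y).
Proof.
elim: a x => [|a IH] x /=; first by move=> _ hy; rewrite add0n; apply: (idealM (pw_ideal b)).
move=> [l [h ->]] hy; rewrite mulr_suml; apply: ideal_sum; first exact: (pw_ideal (a.+1 + b)).
move=> p /h [h1 h2]; rewrite -mulrA; apply: pw_S => //; exact: IH.
Qed.

Lemma pw_succ n : sub (pw n.+1) (pw n).
Proof. move=> z [l [h ->]]; apply: ideal_sum; first exact: pw_ideal. move=> p /h [_ h2]; exact: (idealM (pw_ideal n)). Qed.

Lemma pw_anti m n : (m <= n)%N -> sub (pw n) (pw m).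
Proof.
move=> /subnK <-; elim: (n - m)%N => [|k IH] z; first by rewrite add0n.
by rewrite addSn => /pw_succ /IH.
Qed.

Lemma ideal_subM I : ideal I -> ~ I 1 -> sub I M.
Proof.
move=> hI h1 x hx; apply: NNPP => hM; have [y hy] := HMu hM.
by apply: h1; rewrite -hy mulrC; apply: (idealM hI).
Qed.

Lemma unit_notM x y : x * y = 1 -> ~ M x.
Proof. by move=> h hx; apply: HM1; rewrite -h; apply: (idealMr HMi). Qed.

Variable T : nat.
Hypothesis Hnil : forall z, pw T z -> z = 0.

Lemma NL C D a : ideal C -> ideal D -> D a -> ~ C a ->
  exists b, D b /\ ~ C b /\ (forall m, M m -> C (b * m)).
Proof.
move=> hC hD hDa hCa.
suff: forall n, (forall m, pw n m -> C (m * a)) -> exists b, D b /\ ~ C b /\ (forall m, M m -> C (b * m)).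
  by apply; move=> m /Hnil ->; rewrite mul0r; apply: ideal0.
elim=> [|n IH] h; first by exfalso; apply: hCa; rewrite -[a]mul1r; apply: h.
case: (classic (exists m, pw n m /\ ~ C (m * a))) => [[m [hm hma]]|hn].
- exists (m * a); split; first exact: (idealM hD).
  split => // x hx; rewrite mulrC mulrA; apply: h; exact: pw_S.
- apply: IH => m hm; apply: NNPP => hc; apply: hn; by exists m.
Qed.

Variable v : A.
Hypothesis Hsoc : forall z, ann_ideal M z <-> principal v z.
Hypothesis Hv : v <> 0.

Lemma vM m : M m -> v * m = 0.
Proof. by have := (proj2 (Hsoc v)); apply; exists 1; rewrite mul1r. Qed.

Lemma soc_unit c : c * v <> 0 -> exists c', c * c' = 1.
Proof. move=> h; apply: HMu => hc; apply: h; rewrite mulrC; exact: vM. Qed.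

Lemma soc_in I : ideal I -> (exists z, I z /\ z <> 0) -> I v.
Proof.
move=> hI [z [hz hz0]].
have [b [hb [hb0 hbM]]] := NL (ideal_zero A) hI hz hz0.
have [c hc] := (proj1 (Hsoc b)) hbM.
have [c' hc'] : exists c', c * c' = 1 by apply: soc_unit; rewrite -hc.
have -> : v = c' * b by rewrite hc mulrA [c' * c]mulrC hc' mul1r.
exact: (idealM hI).
Qed.



Definition ext D (b : A) := fun z => exists d a, D d /\ z = d + a * b.
Definition inter D E := fun z : A => D z /\ E z.

Lemma ext_ideal D b : ideal D -> ideal (ext D b).
Proof.
move=> hD; split; [|split].
- by exists 0, 0; split; [apply: ideal0 | rewrite mul0r addr0].
- move=> x y [d [a [hd ->]]] [d' [a' [hd' ->]]]; exists (d + d'), (a + a'); split; first exact: idealD.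
  by rewrite mulrDl addrACA.
- move=> c x [d [a [hd ->]]]; exists (c * d), (c * a); split; first exact: idealM.
  by rewrite mulrDr mulrA.
Qed.

Lemma ext_sub D b : sub D (ext D b).
Proof. by move=> z hz; exists z, 0; rewrite mul0r addr0. Qed.

Lemma ext_b D b : ideal D -> ext D b b.
Proof. by move=> hD; exists 0, 1; rewrite mul1r add0r; split => //; apply: ideal0. Qed.

Lemma inter_ideal D E : ideal D -> ideal E -> ideal (inter D E).
Proof.
move=> hD hE; split; [|split].
- by split; apply: ideal0.
- by move=> x y [? ?] [? ?]; split; apply: idealD.
- by move=> a x [? ?]; split; apply: idealM.
Qed.

Inductive cs (C : A -> Prop) : (A -> Prop) -> nat -> Prop :=
| cs0 : cs C C 0
| csS D b n : cs C D n -> ~ D b -> (forall m, M m -> D (b * m)) -> cs C (ext D b) n.+1.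

Inductive sc (E : A -> Prop) : (A -> Prop) -> nat -> Prop :=
| sc0 : sc E E 0
| scS F G n : sc E F n -> ideal G -> sub F G -> (exists x, G x /\ ~ F x) -> sc E G n.+1.

Lemma cs_trans C D E n m : cs C D n -> cs D E m -> cs C E (n + m).
Proof.
move=> h1 h2; elim: h2 => [|E' b m' h IH hb hbM]; first by rewrite addn0.
by rewrite addnS; apply: csS.
Qed.

Lemma cs_sub C D n : cs C D n -> sub C D.
Proof. elim=> [|D' b n' h IH _ _] z //; move/IH; exact: ext_sub. Qed.

Lemma cs_ideal C D n : ideal C -> cs C D n -> ideal D.
Proof. move=> hC; elim=> // D' b n' h IH _ _; exact: ext_ideal. Qed.

Lemma cs_sc C D n : ideal C -> cs C D n -> sc C D n.
Proof.
move=> hC; elim=> [|D' b n' h IH hb _]; first exact: sc0.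
have hD := cs_ideal hC h.
apply: (scS IH); first exact: (ext_ideal b hD).
  exact: ext_sub.
by exists b; split => //; apply: ext_b.
Qed.

Lemma sc_sub E F n : sc E F n -> sub E F.
Proof. elim=> [|F' G n' h IH _ hFG _] z //; by move/IH/hFG. Qed.

Lemma sc_strict E F n : sc E F n -> (0 < n)%N -> exists x, F x /\ ~ E x.
Proof.
case=> // F0 G n0 h hG hFG [x [hx hxF]] _; exists x; split => // hE; apply: hxF; exact: (sc_sub h).
Qed.

Lemma sc_ideal E F n : ideal E -> sc E F n -> ideal F.
Proof. by move=> hE; elim. Qed.

Lemma simple_between D' b L : ideal D' -> (forall m, M m -> D' (b * m)) -> ideal L ->
  sub D' L -> sub L (ext D' b) -> sub L D' \/ sub (ext D' b) L.
Proof.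
move=> hD hbM hL h1 h2.
case: (classic (exists x, L x /\ ~ D' x)) => [[x [hx hxD]]|hno]; last first.
  by left => z hz; apply: NNPP => hz'; apply: hno; exists z.
right; have [d [a [hd hxe]]] := h2 x hx.
have haM : ~ M a.
  move=> haM; apply: hxD; rewrite hxe; apply: idealD => //; rewrite mulrC; exact: hbM.
have [a' ha'] := HMu haM.
have hbL : L b.
  have -> : b = a' * (x - d) by rewrite hxe [d + _]addrC addrK mulrA [a' * a]mulrC ha' mul1r.
  apply: (idealM hL); apply: (idealB hL) => //; exact: h1.
move=> z [d0 [c [hd0 ->]]]; apply: (idealD hL); first exact: h1. exact: (idealM hL).
Qed.

Lemma Qint D' b E F n : ideal D' -> ideal E -> (forall m, M m -> D' (b * m)) ->
  sc E F n -> sub F (ext D' b) ->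
  exists k, sc (inter E D') (inter F D') k /\ (n <= k.+1)%N /\ (sub F D' -> (n <= k)%N).
Proof.
move=> hD hE hbM h; elim: h => [|F0 G n0 h IH hG hFG [x [hGx hFx]]] hsub.
  by exists 0%N; split; [exact: sc0 | split].
have hF0 : ideal F0 := sc_ideal hE h.
have [k [hk [hn1 hn2]]] := IH (fun z hz => hsub z (hFG z hz)).
case: (classic (exists y, G y /\ D' y /\ ~ F0 y)) => [[y [hy1 [hy2 hy3]]]|hno].
  exists k.+1; split; last by split => // hGD; apply: hn2 => z /hFG /hGD.
  apply: (scS hk); first exact: inter_ideal.
    by move=> z [h1 h2]; split => //; apply: hFG.
  by exists y; split => // [[]].
have hno' : forall y, G y -> D' y -> F0 y.
  by move=> y h1 h2; apply: NNPP => h3; apply: hno; exists y.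
pose L := fun z => exists f d, F0 f /\ D' d /\ z = f + d.
have hL : ideal L.
  split; [|split].
  - by exists 0, 0; rewrite addr0; split; [apply: ideal0|split => //; apply: ideal0].
  - move=> z1 z2 [f [d [hf [hd ->]]]] [f' [d' [hf' [hd' ->]]]]; exists (f + f'), (d + d').
    by rewrite addrACA; split; [apply: idealD|split => //; apply: idealD].
  - move=> a z [f [d [hf [hd ->]]]]; exists (a * f), (a * d).
    by rewrite mulrDr; split; [apply: idealM|split => //; apply: idealM].
have hxL : ~ L x.
  move=> [f [d [hf [hd hxe]]]]; apply: hFx.
  have hdG : G d.
    have -> : d = x - f by rewrite hxe [f + _]addrC addrK.
    by apply: (idealB hG) => //; apply: hFG.
  have := hno' d hdG hd => hdF; rewrite hxe; exact: idealD.
have hL1 : sub D' L.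
  by move=> z hz; exists 0, z; rewrite add0r; split; [apply: ideal0 | split].
have hL2 : sub L (ext D' b).
  move=> z [f [d [hf [hd ->]]]]; apply: (idealD (ext_ideal b hD)).
    by apply: hsub; apply: hFG.
  exact: ext_sub.
have [hLD|hLD] := simple_between hD hbM hL hL1 hL2.
- have hFD : sub F0 D' by move=> z hz; apply: hLD; exists z, 0; rewrite addr0; split => //; split => //; apply: ideal0.
  have -> : inter G D' = inter F0 D'.
    apply: pext => z; split; first by move=> [h1 h2]; split => //; apply: hno'.
    by move=> [h1 h2]; split => //; apply: hFG.
  exists k; split => //; split; first exact: hn2.
  move=> hGD; exfalso; apply: hxL; exists 0, x; rewrite add0r; split; first exact: ideal0.
  by split => //; apply: hGD.
- by exfalso; apply: hxL; apply: hLD; apply: hsub.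
Qed.

Lemma bound C D m : cs C D m -> ideal C -> forall E F n, sc E F n -> ideal E -> sub C E -> sub F D -> (n <= m)%N.
Proof.
elim=> [|D' b m0 h IH hb hbM] hC E F n hsc hE hCE hFD.
  case: n hsc => // n hsc; exfalso.
  have [x [hx hxE]] := sc_strict hsc (ltn0Sn n).
  by apply: hxE; apply: hCE; apply: hFD.
have hD' := cs_ideal hC h.
have [k [hk [hn1 _]]] := Qint hD' hE hbM hsc hFD.
have := IH hC _ _ _ hk (inter_ideal hE hD').
move=> /(_ (fun z hz => conj (hCE z hz) (cs_sub h hz))) /(_ (fun z hz => proj2 hz)) hkm.
by apply: leq_trans hn1 _.
Qed.

Lemma ann_sub I J : sub I J -> sub (ann_ideal J) (ann_ideal I).
Proof. by move=> h z hz x hx; apply: hz; apply: h. Qed.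

Lemma AnnL C D2 n : cs C D2 n -> ideal C -> exists m, cs (ann_ideal D2) (ann_ideal C) m /\ (m <= n)%N.
Proof.
elim=> [|D b n0 h IH hb hbM] hC; first by exists 0%N; split => //; exact: cs0.
have [m [hm hmn]] := IH hC.
have hD := cs_ideal hC h.
pose D1 := ext D b.
case: (classic (exists z, ann_ideal D z /\ ~ ann_ideal D1 z)) => [[z [hz hz1]]|hno]; last first.
  have -> : ann_ideal D1 = ann_ideal D.
    apply: pext => z; split; first exact: (ann_sub (@ext_sub D b)).
    by move=> hz; apply: NNPP => hz1; apply: hno; exists z.
  by exists m; split => //; apply: leq_trans hmn _.
have hzb : z * b <> 0.
  move=> hzb; apply: hz1 => x [d [a [hd ->]]]; rewrite mulrDr hz // mulrCA hzb mulr0 addr0 //.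
have hzM : forall m, M m -> ann_ideal D1 (z * m).
  move=> m0 hm0 x [d [a [hd ->]]].
  have -> : z * m0 * (d + a * b) = m0 * (z * d) + a * (z * (b * m0)) by ring.
  by rewrite hz // hz ?mulr0 ?addr0 //; apply: hbM.
have heq : ann_ideal D = ext (ann_ideal D1) z.
  apply: pext => z'; split; last first.
    move=> [u [a [hu ->]]]; apply: (idealD (ann_ideal_ideal D)); first exact: (ann_sub (@ext_sub D b)).
    exact: (idealM (ann_ideal_ideal D)).
  move=> hz'.
  have hs1 : ann_ideal M (z' * b) by move=> m0 hm0; rewrite -mulrA; apply: hz'; exact: hbM.
  have hs2 : ann_ideal M (z * b) by move=> m0 hm0; rewrite -mulrA; apply: hz; exact: hbM.
  have [al hal] := (proj1 (Hsoc _)) hs1.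
  have [be hbe] := (proj1 (Hsoc _)) hs2.
  have [be' hbe'] : exists c, be * c = 1 by apply: soc_unit; rewrite -hbe.
  exists (z' - (al * be') * z), (al * be'); split; last by rewrite addrNK.
  move=> x [d [a [hd ->]]].
  have -> : (z' - al * be' * z) * (d + a * b) = z' * d - al * be' * (z * d) + a * (z' * b - al * be' * (z * b)) by ring.
  rewrite hz' // hz // hal hbe.
  have -> : al * v - al * be' * (be * v) = al * v * (1 - be * be') by ring.
  by rewrite hbe' subrr !mulr0 subr0 addr0.
have hz1' : ~ ann_ideal D1 z := hz1.
have hcs : cs (ann_ideal D1) (ann_ideal D) 1.
  rewrite heq; apply: csS => //; exact: cs0.
by exists (1 + m)%N; split; [apply: cs_trans hcs hm | rewrite add1n].
Qed.

Hypothesis Hnoeth : noetherian A.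

Lemma NI (P : (A -> Prop) -> Prop) :
  (forall C, ideal C -> (forall C', ideal C' -> sub C C' -> (exists x, C' x /\ ~ C x) -> P C') -> P C) ->
  forall C, ideal C -> P C.
Proof.
move=> H C0 hC0; apply: NNPP => hP0.
pose Ty := {C : A -> Prop | ideal C /\ ~ P C}.
have step : forall c : Ty, {c' : Ty | sub (sval c) (sval c') /\ exists x, sval c' x /\ ~ sval c x}.
  move=> [C [hC hP]]; apply: constructive_indefinite_description.
  apply: NNPP => hno; apply: (hP); apply: H => // C' hC' hsub hx; apply: NNPP => hP'; apply: (hno).
  by exists (exist _ C' (conj hC' hP')).
pose nxt := fun c => sval (step c).
pose c0 : Ty := exist _ C0 (conj hC0 hP0).
pose sq := fun n => sval (iter n nxt c0).
have hsq1 : forall n, sub (sq n) (sq n.+1) /\ exists x, sq n.+1 x /\ ~ sq n x.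
  by move=> n; rewrite /sq /= /nxt; case: (step (iter n nxt c0)) => c' hc'.
have mono : forall i j, (i <= j)%N -> sub (sq i) (sq j).
  move=> i j /subnK <-; elim: (j - i)%N => [|k IH] z; first by rewrite add0n.
  by move/IH; rewrite addSn; apply: (proj1 (hsq1 _)).
have hid : forall n, ideal (sq n) by move=> n; rewrite /sq; case: (iter n nxt c0) => c [].
pose U := fun z => exists n, sq n z.
have hU : ideal U.
  split; [|split].
  - by exists 0%N; apply: ideal0.
  - move=> x y [i hi] [j hj]; exists (maxn i j); apply: idealD => //.
      by apply: (mono i) => //; apply: leq_maxl.
    by apply: (mono j) => //; apply: leq_maxr.
  - by move=> a x [i hi]; exists i; apply: idealM.
have [s hs] := Hnoeth hU.
have [N hN] : exists N, forall x, x \in s -> sq N x.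
  have : forall x, x \in s -> U x by move=> x hx; apply/hs; apply: gen1.
  elim: s {hs} => [|x s IH] hsU; first by exists 0%N.
  have [N1 hN1] : exists N, forall y, y \in s -> sq N y.
    by apply: IH => y hy; apply: hsU; rewrite inE hy orbT.
  have [N2 hN2] : U x by apply: hsU; rewrite inE eqxx.
  exists (maxn N1 N2) => y; rewrite inE => /orP [/eqP ->|hy].
    by apply: (mono N2) => //; apply: leq_maxr.
  by apply: (mono N1); [apply: leq_maxl | apply: hN1].
have hUN : sub U (sq N).
  by move=> z /hs; apply: gen_sub => //; apply: hN.
have [x [hx hxN]] := proj2 (hsq1 N).
by apply: hxN; apply: hUN; exists N.+1.
Qed.

Lemma ExC C D : ideal C -> ideal D -> sub C D -> exists n, cs C D n.
Proof.
move=> hC hD; move: C hC; apply: NI => C hC IH hCD.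
case: (classic (exists a, D a /\ ~ C a)) => [[a [ha hCa]]|hno]; last first.
  have -> : D = C.
    apply: pext => z; split; last exact: hCD.
    by move=> hz; apply: NNPP => hz'; apply: hno; exists z.
  by exists 0%N; exact: cs0.
have [b [hb [hCb hbM]]] := NL hC hD ha hCa.
have [n hn] : exists n, cs (ext C b) D n.
  apply: IH; first exact: ext_ideal.
  - exact: ext_sub.
  - by exists b; split => //; apply: ext_b.
  - move=> z [d [c [hd ->]]]; apply: idealD => //; first exact: hCD.
    exact: idealM.
have h1 : cs C (ext C b) 1 by apply: csS => //; exact: cs0.
by exists (1 + n)%N; apply: cs_trans h1 hn.
Qed.

Lemma Inj J b : ideal J -> ~ J b -> (forall m, M m -> J (b * m)) ->
  exists z, ann_ideal J z /\ z * b <> 0.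
Proof.
move=> hJ hb hbM; apply: NNPP => hno.
have eqA : ann_ideal (ext J b) = ann_ideal J.
  apply: pext => z; split; first exact: (ann_sub (@ext_sub J b)).
  move=> hz x [d [a [hd ->]]]; rewrite mulrDr hz // add0r mulrCA.
  have -> : z * b = 0 by apply: NNPP => hzb; apply: hno; exists z.
  by rewrite mulr0.
pose Z := fun z : A => z = 0.
pose Tp := fun z : A => True.
have hZ : ideal Z := ideal_zero A.
have hT : ideal Tp := ideal_top A.
have [p hp] := ExC hZ hJ (fun z (hz : Z z) => eq_ind_r J (ideal0 hJ) hz).
have hJb := ext_ideal b hJ.
have [q hq] := ExC hJb hT (fun z _ => I).
have [p1 [hp1 hp1p]] := AnnL hp hZ.
have [q1 [hq1 hq1q]] := AnnL hq hJb.
rewrite eqA in hq1.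
have hall := cs_trans hq1 hp1.
have e1 : ann_ideal Tp = Z.
  by apply: pext => z; split => [h|->]; [rewrite -[z]mulr1; apply: h | move=> x _; rewrite mul0r].
have e2 : ann_ideal Z = Tp.
  by apply: pext => z; split => // _ x ->; rewrite mulr0.
rewrite e1 e2 in hall.
have horig : cs Z Tp (p.+1 + q).
  by apply: cs_trans hq; apply: csS.
have := bound hall hZ (cs_sc hZ horig) hZ (fun z h => h) (fun z h => h).
move=> hle; have := leq_add hp1p hq1q; rewrite addnC => hle2.
have := leq_trans hle hle2; by rewrite addSn ltnn.
Qed.

Lemma DA J a : ideal J -> ann_ideal (ann_ideal J) a -> J a.
Proof.
move=> hJ ha; apply: NNPP => hJa.
have [b [[d [c [hd hbe]]] [hJb hbM]]] := NL hJ (ext_ideal a hJ) (ext_b a hJ) hJa.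
have [z [hz hzb]] := Inj hJ hJb hbM.
by apply: hzb; rewrite hbe mulrDr (hz d hd) add0r mulrCA [z * a]mulrC (ha z hz) mulr0.
Qed.

Definition NX (X : A -> Prop) z := exists g m, gen_by X g /\ pw 2 m /\ z = g + m.

Lemma NX_ideal X : ideal (NX X).
Proof.
have h2 := pw_ideal 2; have hg := gen_ideal X.
split; [|split].
- by exists 0, 0; rewrite addr0; split; [apply: ideal0 | split => //; apply: ideal0].
- move=> x y [g [m [hg1 [hm ->]]]] [g' [m' [hg' [hm' ->]]]]; exists (g + g'), (m + m').
  by rewrite addrACA; split; [apply: idealD|split => //; apply: idealD].
- move=> a x [g [m [hg1 [hm ->]]]]; exists (a * g), (a * m).
  by rewrite mulrDr; split; [apply: idealM|split => //; apply: idealM].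
Qed.

Lemma NX_gen X z : gen_by X z -> NX X z.
Proof. by move=> h; exists z, 0; rewrite addr0; split => //; split => //; apply: ideal0; apply: pw_ideal. Qed.

Lemma NX_pw2 X z : pw 2 z -> NX X z.
Proof. by move=> h; exists 0, z; rewrite add0r; split => //; apply: ideal0; apply: gen_ideal. Qed.

Lemma NX_mono X1 X2 : (forall u, X1 u -> NX X2 u) -> sub (NX X1) (NX X2).
Proof.
move=> h z [g [m [hg [hm ->]]]]; apply: (idealD (NX_ideal X2)); last exact: NX_pw2.
by apply: (gen_sub (NX_ideal X2)) hg.
Qed.

Lemma Nak X : sub X M -> (forall z, M z -> NX X z) -> forall z, M z -> gen_by X z.
Proof.
move=> hXM hN.
have key : forall k z, M z -> exists g m, gen_by X g /\ pw k.+1 m /\ z = g + m.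
  elim=> [|k IH] z hz.
    by exists 0, z; rewrite add0r; split; [apply: ideal0; apply: gen_ideal | split => //; apply/pw1].
  have [g [m [hg [[l [hl ->]] ->]]]] := IH z hz.
  suff [g' [m' [hg' [hm' ->]]]] : exists g' m', gen_by X g' /\ pw k.+2 m' /\
      \sum_(p <- l) p.1 * p.2 = g' + m'.
    by exists (g + g'), m'; rewrite addrA; split => //; apply: (idealD (gen_ideal X)).
  elim: l hl => [|p l IHl] hl.
    by exists 0, 0; rewrite big_nil addr0; split; [apply: ideal0; apply: gen_ideal | split => //; apply: ideal0; apply: pw_ideal].
  have [hp1 hp2] := hl p (mem_head _ _).
  rewrite big_cons.
  have [g1 [m1 [hg1 [hm1 ->]]]] := hN _ hp1.
  have [g2 [m2 [hg2 [hm2 ->]]]] : exists g' m', gen_by X g' /\ pw k.+2 m' /\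
      \sum_(p <- l) p.1 * p.2 = g' + m'.
    by apply: IHl => q hq; apply: hl; rewrite inE hq orbT.
  exists (g1 * p.2 + g2), (m1 * p.2 + m2); split; first by apply: (idealD (gen_ideal X)) => //; apply: (idealMr (gen_ideal X)).
  split; last by rewrite mulrDl addrACA.
  apply: (idealD (pw_ideal _)) => //.
  by have := pw_mul hm1 hp2; rewrite add2n.
move=> z hz; have [g [m [hg [hm ->]]]] := key T z hz.
by rewrite (Hnil (pw_succ hm)) addr0.
Qed.

Lemma mem_rem (s : seq A) i u : (i < size s)%N -> u \in s ->
  (u \in take i s ++ drop i.+1 s) \/ u = nth 0 s i.
Proof.
move=> hi; rewrite -{1}(cat_take_drop i s) (drop_nth 0 hi) mem_cat inE.
case/orP => [h|/orP [/eqP ->|h]]; [left; rewrite mem_cat h // | by right | by left; rewrite mem_cat h orbT].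
Qed.

Lemma mem_rem_sub (s : seq A) i u : u \in take i s ++ drop i.+1 s -> u \in s.
Proof. by rewrite mem_cat => /orP [/mem_take|/mem_drop]. Qed.

Lemma gen_nil z : gen_by (fun x : A => x \in [::]) z -> z = 0.
Proof. by move=> [[|p l] [h ->]]; [rewrite big_nil | have := h p (mem_head _ _)]. Qed.

Lemma GC (w : A) s y : gen_by (fun x => x \in w :: s) y -> exists c, gen_by (fun x => x \in s) (y - c * w).
Proof.
move=> [l [hl ->]]; elim: l hl => [|p l IH] hl.
  by exists 0; rewrite big_nil mul0r subr0; apply: ideal0; apply: gen_ideal.
have [c hc] : exists c, gen_by (fun x => x \in s) (\sum_(j <- l) j.1 * j.2 - c * w).
  by apply: IH => q hq; apply: hl; rewrite inE hq orbT.
have := hl p (mem_head _ _); rewrite inE => /orP [/eqP hpw|hps].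
  by exists (p.1 + c); rewrite big_cons hpw; have -> : p.1 * w + \sum_(j <- l) j.1 * j.2 - (p.1 + c) * w = \sum_(j <- l) j.1 * j.2 - c * w by ring.
exists c; rewrite big_cons -addrA; apply: (idealD (gen_ideal _)) => //.
apply: (idealM (gen_ideal _)); exact: gen1.
Qed.

Lemma EX s : forall y, (forall w, w \in s -> M w) -> gen_by (fun x => x \in s) y -> ~ pw 2 y ->
  exists j, (j < size s)%N /\ NX (fun x => x \in y :: (take j s ++ drop j.+1 s)) (nth 0 s j).
Proof.
elim: s => [|w s IH] y hsM hy hy2.
  by exfalso; apply: hy2; rewrite (gen_nil hy); apply: ideal0; apply: pw_ideal.
have [c hc] := GC hy.
case: (classic (M c)) => hcM; last first.
  have [c' hc'] := HMu hcM.
  exists 0%N; split => //=; rewrite drop0; apply: NX_gen.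
  have e : c' * y - c' * (y - c * w) = (c * c') * w by ring.
  have -> : w = c' * y - c' * (y - c * w) by rewrite e hc' mul1r.
  apply: (idealB (gen_ideal _)); first by apply: (idealM (gen_ideal _)); apply: gen1; exact: mem_head.
  apply: (idealM (gen_ideal _)); move: hc; apply: gen_mono => x hx; by rewrite inE hx orbT.
have hcw : pw 2 (c * w) by apply: (@pw_mul 1 1); apply/pw1 => //; apply: hsM; exact: mem_head.
have hy' : ~ pw 2 (y - c * w).
  move=> h; apply: hy2; have -> : y = (y - c * w) + c * w by rewrite subrK.
  exact: (idealD (pw_ideal 2)).
have [j [hj hN]] := IH _ (fun u hu => hsM u (introT orP (or_intror hu))) hc hy'.
exists j.+1; split => //=; move: hN; apply: NX_mono => u; rewrite inE => /orP [/eqP ->|hu].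
  apply: NX_gen; apply: (idealB (gen_ideal _)); first by apply: gen1; exact: mem_head.
  by apply: (idealM (gen_ideal _)); apply: gen1; rewrite !inE eqxx orbT.
by apply: NX_gen; apply: gen1; rewrite !inE hu !orbT.
Qed.

Lemma MGinv y : minimal_generator M y -> M y /\ ~ pw 2 y.
Proof.
move=> [s [hys [hgen hmin]]].
have hyM : M y by apply/hgen; apply: gen1.
split => // hy2.
have hi : (index y s < size s)%N by rewrite index_mem.
apply: (hmin _ hi) => z; split; last first.
  apply: gen_sub => // u /mem_rem_sub hu; apply/hgen; exact: gen1.
move=> hz; apply: Nak => //; first by move=> u /mem_rem_sub hu; apply/hgen; exact: gen1.
move=> z' /hgen; apply: (gen_sub (NX_ideal _)) => u hu.
case: (mem_rem hi hu) => [h|->]; first by apply: NX_gen; exact: gen1.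
by rewrite nth_index //; apply: NX_pw2.
Qed.

Lemma MG y : M y -> ~ pw 2 y -> minimal_generator M y.
Proof.
move=> hyM hy2.
have [s0 hs0] := Hnoeth HMi.
suff: forall n (s : seq A), (size s <= n)%N -> y \in s -> (forall z, M z <-> gen_by (fun x => x \in s) z) ->
   minimal_generator M y.
  move/(_ (size (y :: s0)) (y :: s0) (leqnn _) (mem_head _ _)); apply.
  move=> z; split.
    move/hs0; apply: gen_mono => x hx; by rewrite inE hx orbT.
  apply: gen_sub => // u; rewrite inE => /orP [/eqP -> //|hu]; apply/hs0; exact: gen1.
elim=> [|n IH] s hsz hys hgen; first by move: hsz; rewrite leqn0 => /nilP hs; move: hys; rewrite hs.
case: (classic (forall i, (i < size s)%N ->
      ~ (forall z, M z <-> gen_by (fun x => x \in take i s ++ drop i.+1 s) z))) => hall.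
  by exists s.
have [i [hi hgi]] : exists i, (i < size s)%N /\ (forall z, M z <-> gen_by (fun x => x \in take i s ++ drop i.+1 s) z).
  apply: NNPP => hno; apply: hall => i hi hg; apply: hno; by exists i.
set s' := take i s ++ drop i.+1 s in hgi.
have hsz' : (size s' <= n)%N.
  rewrite /s' size_cat size_take hi size_drop.
  by move: hsz hi; case: (size s) => // k; rewrite ltnS subSS => h1 h2; rewrite subnKC.
have hs'M : forall w, w \in s' -> M w by move=> w hw; apply/hgi; exact: gen1.
case: (boolP (y \in s')) => hys'; first exact: IH hsz' hys' hgi.
have [j [hj hN]] := EX hs'M ((proj1 (hgi y)) hyM) hy2.
apply: (IH (y :: (take j s' ++ drop j.+1 s'))).
- rewrite /= size_cat size_take hj size_drop.
  move: hsz' hj; case: (size s') => // k; rewrite ltnS subSS => h1 h2; by rewrite subnKC.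
- exact: mem_head.
- move=> z; split; last first.
    apply: gen_sub => // u; rewrite inE => /orP [/eqP -> //|/mem_rem_sub hu]; exact: hs'M.
  move=> hz; apply: Nak => //.
    by move=> u; rewrite inE => /orP [/eqP -> //|/mem_rem_sub hu]; exact: hs'M.
  move=> z' /hgi; apply: (gen_sub (NX_ideal _)) => u hu.
  case: (mem_rem hj hu) => [h|->] //; apply: NX_gen; apply: gen1; by rewrite inE h orbT.
Qed.

Definition imM (B : comNzRingType) (f : {rmorphism A -> B}) := fun b => exists a, M a /\ f a = b.

Lemma IMGf (B : comNzRingType) (f : {rmorphism A -> B}) n a : pw n a -> ideal_pow (imM f) n (f a).
Proof.
elim: n a => [|n IH] a //= [l [h ->]].
exists [seq (f p.1, f p.2) | p <- l]; split.
  move=> q /mapP [p hp ->] /=; have [h1 h2] := h p hp; split; [by exists p.1 | exact: IH].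
by rewrite rmorph_sum big_map; apply: eq_bigr => p _; rewrite rmorphM.
Qed.

Lemma IMGb (B : comNzRingType) (f : {rmorphism A -> B}) n b : (forall b, exists a, f a = b) ->
  ideal_pow (imM f) n b -> exists a, pw n a /\ f a = b.
Proof.
move=> hsurj; elim: n b => [|n IH] b /=; first by move=> _; have [a ha] := hsurj b; exists a.
move=> [l [h ->]]; elim: l h => [|p l IHl] h.
  by exists 0; rewrite big_nil rmorph0; split => //; exact: (ideal0 (pw_ideal n.+1)).
have [[a1 [ha1 e1]] h2] := h p (mem_head _ _).
have [a2 [ha2 e2]] := IH _ h2.
have [a' [ha' e']] : exists a, pw n.+1 a /\ f a = \sum_(j <- l) j.1 * j.2.
  by apply: IHl => q hq; apply: h; rewrite inE hq orbT.
exists (a1 * a2 + a'); split; first by apply: (idealD (pw_ideal n.+1)) => //; apply: pw_S.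
by rewrite big_cons rmorphD rmorphM e1 e2 e'.
Qed.

Lemma UMI (B : comNzRingType) (f : {rmorphism A -> B}) I MB :
  ideal I -> ~ I 1 -> is_quotient f I -> local_ring MB -> forall b, MB b <-> imM f b.
Proof.
move=> hI hI1 [hsurj hker] [hMB [hMB1 hMBu]] b; split.
  move=> hb; have [a ha] := hsurj b; exists a; split => //.
  apply: NNPP => haM; have [a' ha'] := HMu haM; apply: hMB1.
  by rewrite -(rmorph1 f) -ha' rmorphM ha; apply: (idealMr hMB).
move=> [a [haM <-]]; apply: NNPP => hn; have [c hc] := hMBu _ hn.
have [c' hc'] := hsurj c.
have hIa : I (a * c' - 1) by apply/hker; rewrite rmorphB rmorphM hc' hc rmorph1 subrr.
have := ideal_subM hI hI1 hIa => hM1.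
apply: HM1; have -> : 1 = a * c' - (a * c' - 1) by rewrite opprB addrC subrK.
by apply: (idealB HMi) => //; apply: (idealMr HMi).
Qed.

Lemma QE (B : comNzRingType) (f : {rmorphism A -> B}) I e :
  ideal I -> ~ I 1 -> is_quotient f I -> (forall a, pw e a -> I a) ->
  (forall r, (forall a, pw r a -> I a) -> (e <= r)%N) -> quot_exponent I e.
Proof.
move=> hI hI1 [hsurj hker] he hmin; exists B, f, (imM f); split => //; split.
  split; [|split].
  - split; [|split].
    + by exists 0; rewrite rmorph0; split => //; apply: ideal0.
    + move=> x y [a [ha <-]] [a' [ha' <-]]; exists (a + a'); rewrite rmorphD; split => //; exact: idealD.
    + move=> c x [a [ha <-]]; have [c' <-] := hsurj c; exists (c' * a); rewrite rmorphM; split => //; exact: idealM.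
  - move=> [a [haM hfa]]; have hIa : I (1 - a) by apply/hker; rewrite rmorphB rmorph1 hfa subrr.
    apply: HM1; have -> : 1 = (1 - a) + a by rewrite subrK.
    by apply: idealD => //; apply: ideal_subM hI hI1 _ hIa.
  - move=> b hb; have [a ha] := hsurj b.
    have haM : ~ M a by move=> haM; apply: hb; exists a.
    by have [a' ha'] := HMu haM; exists (f a'); rewrite -ha -rmorphM ha' rmorph1.
split.
  by move=> z /(IMGb hsurj) [a [ha <-]]; apply/hker; apply: he.
move=> r hr; apply: hmin => a ha; apply/hker; apply: hr; exact: IMGf.
Qed.

Lemma QEinv I e : ideal I -> ~ I 1 -> quot_exponent I e ->
  (forall a, pw e a -> I a) /\ (forall r, (forall a, pw r a -> I a) -> (e <= r)%N).
Proof.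
move=> hI hI1 [B [f [MB [hq [hloc [he hmin]]]]]].
have eq := pext (UMI hI hI1 hq hloc).
rewrite eq in he hmin.
have [hsurj hker] := hq.
split; first by move=> a ha; apply/hker; apply: he; apply: IMGf.
move=> r hr; apply: hmin => z /(IMGb hsurj) [a [ha <-]]; apply/hker; exact: hr.
Qed.

Section Graded.
Variable G : nat -> A -> Prop.
Hypothesis HG : graded G.

Lemma G0 n : G n 0. Proof. by case: HG. Qed.
Lemma Gadd n x y : G n x -> G n y -> G n (x + y). Proof. by case: HG => _ [h _]; apply: h. Qed.
Lemma Gopp n x : G n x -> G n (- x). Proof. by case: HG => _ [_ [h _]]; apply: h. Qed.
Lemma Gmul m n x y : G m x -> G n y -> G (m + n)%N (x * y). Proof. by case: HG => _ [_ [_ [h _]]]; apply: h. Qed.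
Lemma Gdec z : exists (N : nat) (c : nat -> A), (forall i, G i (c i)) /\ z = \sum_(i < N) c i.
Proof. by case: HG => _ [_ [_ [_ [h _]]]]; apply: h. Qed.
Lemma Guniq (N : nat) (c : nat -> A) : (forall i, G i (c i)) -> \sum_(i < N) c i = 0 ->
     forall i, (i < N)%N -> c i = 0.
Proof. by case: HG => _ [_ [_ [_ [_ h]]]]; apply: h. Qed.

Lemma Gsum n (Ty : eqType) (l : seq Ty) (P : pred Ty) (Fn : Ty -> A) :
  (forall p, p \in l -> P p -> G n (Fn p)) -> G n (\sum_(p <- l | P p) Fn p).
Proof.
move=> h; rewrite -big_filter; have : forall p, p \in [seq x <- l | P x] -> G n (Fn p).
  by move=> p; rewrite mem_filter => /andP [h1 h2]; apply: h.
elim: [seq x <- l | P x] => [|p l' IH] h'; first by rewrite big_nil; apply: G0.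
rewrite big_cons; apply: Gadd; first by apply: h'; exact: mem_head.
by apply: IH => q hq; apply: h'; rewrite inE hq orbT.
Qed.

Lemma Gdec_list z : exists l : seq (A * nat), (forall q, q \in l -> G q.2 q.1) /\ z = \sum_(q <- l) q.1.
Proof.
have [N [c [hc ->]]] := Gdec z.
exists [seq (c i, i) | i <- iota 0 N]; split; first by move=> q /mapP [i _ ->].
by rewrite big_map /= -(big_mkord xpredT) /index_iota subn0.
Qed.

Lemma sum2_le (l : seq (A * nat)) q : q \in l -> (q.2 <= \sum_(p <- l) p.2)%N.
Proof.
elim: l => [|p l IH] //; rewrite inE big_cons => /orP [/eqP ->|h]; first exact: leq_addr.
by apply: leq_trans (IH h) _; apply: leq_addl.
Qed.

Lemma UP (l : seq (A * nat)) d x : (forall q, q \in l -> G q.2 q.1) -> G d x -> x = \sum_(q <- l) q.1 ->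
  forall e, \sum_(q <- l | q.2 == e) q.1 = if e == d then x else 0.
Proof.
move=> hl hx hsum.
pose N := (d + \sum_(q <- l) q.2).+1.
have hlt : forall q, q \in l -> (q.2 < N)%N.
  by move=> q hq; rewrite ltnS; apply: leq_trans (sum2_le hq) _; apply: leq_addl.
have hd : (d < N)%N by rewrite ltnS leq_addr.
pose c := fun e : nat => \sum_(q <- l | q.2 == e) q.1 - (if e == d then x else 0).
have hc : forall e, G e (c e).
  move=> e; rewrite /c; apply: Gadd; first by apply: Gsum => q hq /eqP <-; apply: hl.
  apply: Gopp; case: eqP => [->|_] //; exact: G0.
have hs : \sum_(e < N) c e = 0.
  rewrite /c sumrB.
  have -> : \sum_(e < N) (if e == d :> nat then x else 0) = x.
    by rewrite -big_mkcond /= (big_ord1_eq _ (fun _ => x)) hd.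
  have -> : \sum_(e < N) \sum_(q <- l | q.2 == e) q.1 = \sum_(q <- l) q.1.
    under eq_bigr do rewrite big_mkcond.
    rewrite exchange_big /= big_seq [RHS]big_seq; apply: eq_bigr => q hq.
    rewrite -big_mkcond /=.
    under eq_bigl do rewrite eq_sym.
    by rewrite (big_ord1_eq _ (fun _ => q.1)) hlt.
  by rewrite -hsum subrr.
move=> e; case: (ltnP e N) => he.
  by have := Guniq hc hs he; rewrite /c => /eqP; rewrite subr_eq0 => /eqP.
rewrite big1_seq; last first.
  move=> q /andP [/eqP hqe hq]; have := hlt q hq; rewrite hqe => h.
  by have := leq_trans h he; rewrite ltnn.
case: eqP => // hed; move: hd; rewrite -hed => h.
by have := leq_trans h he; rewrite ltnn.
Qed.

Lemma G2 d x : (1 <= d)%N -> G d x -> M x.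
Proof.
move=> hd hx; apply: NNPP => hxM; have [u hu] := HMu hxM.
have [l [hl e1]] := Gdec_list 1.
pose l1 := [seq (x * q.1, (d + q.2)%N) | q <- l].
have hl1 : forall q, q \in l1 -> G q.2 q.1 by move=> q /mapP [p hp ->] /=; apply: Gmul => //; apply: hl.
have hs1 : x = \sum_(q <- l1) q.1 by rewrite big_map -mulr_sumr -e1 mulr1.
have := UP hl1 hx hs1 d; rewrite eqxx big_map.
under eq_bigl do rewrite /= -{2}[d]addn0 eqn_add2l.
rewrite -mulr_sumr => hxe0.
pose e0 := \sum_(j <- l | j.2 == 0%N) j.1.
have he0 : G 0 e0 by apply: Gsum => q hq /eqP <-; apply: hl.
have h1 : G 0 1.
  have -> : 1 = e0 by rewrite -hu -{1}hxe0 mulrAC hu mul1r.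
  exact: he0.
have [l2 [hl2 e2]] := Gdec_list u.
pose l3 := [seq (x * q.1, (d + q.2)%N) | q <- l2].
have hl3 : forall q, q \in l3 -> G q.2 q.1 by move=> q /mapP [p hp ->] /=; apply: Gmul => //; apply: hl2.
have hs3 : 1 = \sum_(q <- l3) q.1 by rewrite big_map -mulr_sumr -e2 hu.
have := UP hl3 h1 hs3 0; rewrite eqxx big_map big_pred0; first by move/esym/eqP; rewrite oner_eq0.
by move=> q /=; rewrite addn_eq0 (negbTE (lt0n_neq0 hd)).
Qed.

Hypothesis HS : A -> Prop.
Hypothesis HS1 : forall x, HS x -> G 1 x.
Hypothesis HSgen : forall z, M z <-> gen_by HS z.

Lemma G3 n x : G n x -> pw n x.
Proof.
elim: n x => [|n IH] x hx //.
have hxM := G2 (ltn0Sn n) hx.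
have [l [hl hxe]] := (proj1 (HSgen x)) hxM.
have [l' [hl' e']] : exists l' : seq (A * nat), (forall q, q \in l' -> G q.2 q.1 /\ (q.2 == n.+1 -> pw n.+1 q.1))
     /\ \sum_(p <- l) p.1 * p.2 = \sum_(q <- l') q.1.
  clear hxe; elim: l hl => [|p l IHl] hl; first by exists [::]; rewrite !big_nil.
  have [l1 [hl1 e1]] : exists l', (forall q, q \in l' -> G q.2 q.1 /\ (q.2 == n.+1 -> pw n.+1 q.1))
     /\ \sum_(p <- l) p.1 * p.2 = \sum_(q <- l') q.1.
    by apply: IHl => q hq; apply: hl; rewrite inE hq orbT.
  have hp := hl p (mem_head _ _).
  have [lp [hlp ep]] := Gdec_list p.1.
  exists ([seq (q.1 * p.2, (q.2 + 1)%N) | q <- lp] ++ l1); split.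
    move=> q; rewrite mem_cat => /orP [/mapP [r hr ->]|hq]; last exact: hl1.
    split; first by apply: Gmul; [apply: hlp | apply: HS1].
    rewrite /= addn1 eqSS => /eqP hr2; apply: pw_Sr; first by apply: IH; rewrite -hr2; apply: hlp.
    by apply/HSgen; apply: gen1.
  by rewrite big_cat big_cons e1 big_map ep mulr_suml.
have := UP (fun q hq => proj1 (hl' q hq)) hx (etrans hxe e') n.+1; rewrite eqxx => <-.
apply: ideal_sum_cond; first exact: pw_ideal.
by move=> q hq; apply: (proj2 (hl' q hq)).
Qed.

Definition HD k z := exists l : seq (A * nat), (forall q, q \in l -> G q.2 q.1 /\ (k <= q.2)%N) /\ z = \sum_(q <- l) q.1.

Lemma HD_add k x y : HD k x -> HD k y -> HD k (x + y).
Proof.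
move=> [l1 [h1 ->]] [l2 [h2 ->]]; exists (l1 ++ l2); split; last by rewrite big_cat.
by move=> q; rewrite mem_cat => /orP [] ?; [apply: h1 | apply: h2].
Qed.

Lemma HD_sum k (Ty : eqType) (l : seq Ty) (Fn : Ty -> A) : (forall p, p \in l -> HD k (Fn p)) -> HD k (\sum_(p <- l) Fn p).
Proof.
elim: l => [|p l IH] h; first by exists [::]; rewrite !big_nil.
rewrite big_cons; apply: HD_add; first by apply: h; exact: mem_head.
by apply: IH => q hq; apply: h; rewrite inE hq orbT.
Qed.

Lemma HD_single_scal k e a h : G e h -> (k <= e)%N -> HD k (a * h).
Proof.
move=> hh hke; have [la [hla ->]] := Gdec_list a.
exists [seq (r.1 * h, (r.2 + e)%N) | r <- la]; split; last by rewrite big_map mulr_suml.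
move=> q /mapP [r hr ->] /=; split; first by apply: Gmul => //; apply: hla.
by apply: leq_trans hke _; apply: leq_addl.
Qed.

Lemma HD_scal k a z : HD k z -> HD k (a * z).
Proof.
move=> [l [hl ->]]; rewrite mulr_sumr; apply: HD_sum => q hq.
by have [h1 h2] := hl q hq; apply: HD_single_scal h1 h2.
Qed.

Lemma HD_homog1 k s z : G 1 s -> HD k z -> HD k.+1 (s * z).
Proof.
move=> hs [l [hl ->]]; exists [seq (s * q.1, (1 + q.2)%N) | q <- l]; split; last by rewrite big_map mulr_sumr.
by move=> q /mapP [r hr ->] /=; have [h1 h2] := hl r hr; split; [apply: Gmul | rewrite add1n ltnS].
Qed.

Lemma HD_pw k z : pw k z -> HD k z.
Proof.
elim: k z => [|k IH] z.
  by move=> _; have [l [hl ->]] := Gdec_list z; exists l; split => // q hq; split => //; apply: hl.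
move=> [l [hl ->]]; apply: HD_sum => p hp.
have [hp1 hp2] := hl p hp.
have [l1 [hl1 ->]] := (proj1 (HSgen _)) hp1.
rewrite mulr_suml; apply: HD_sum => r hr; rewrite -mulrA; apply: HD_scal.
by apply: HD_homog1; [apply: HS1; apply: hl1 | apply: IH].
Qed.

Lemma top_homog t z : (forall w, pw t.+1 w -> w = 0) -> pw t z -> G t z.
Proof.
move=> ht /HD_pw [l [hl ->]]; apply: (@Gsum t _ l xpredT) => q hq _.
have [h1 h2] := hl q hq; move: h2; rewrite leq_eqVlt => /orP [/eqP -> //|h].
rewrite (ht q.1); first exact: G0.
by apply: (pw_anti h); apply: G3.
Qed.



Lemma GR t y : (forall w, pw t.+1 w -> w = 0) -> pw t v -> (1 <= t)%N -> G 1 y -> y <> 0 ->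
  exists z, pw t.-1 z /\ z * y <> 0.
Proof.
move=> ht hvt ht1 hy hy0.
have [x hvx] : principal y v.
  apply: soc_in; first exact: principal_ideal.
  by exists y; split => //; exists 1; rewrite mul1r.
have hvG : G t v := top_homog ht hvt.
have [l [hl hxe]] := Gdec_list x.
pose l1 := [seq (q.1 * y, (q.2 + 1)%N) | q <- l].
have hl1 : forall q, q \in l1 -> G q.2 q.1 by move=> q /mapP [p hp ->] /=; apply: Gmul => //; apply: hl.
have hs1 : v = \sum_(q <- l1) q.1 by rewrite big_map hvx hxe mulr_suml.
have := UP hl1 hvG hs1 t; rewrite eqxx big_map /= => hsum.
apply: NNPP => hno; apply: Hv; rewrite -hsum big1_seq // => q /andP [/eqP hq2 hq].
apply: NNPP => hz; apply: hno; exists q.1; split => //.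
apply: G3; rewrite -hq2 addn1 /=; exact: hl.
Qed.

Lemma deg1 n y : (forall x, G 0 x -> x != 0 -> exists x', G 0 x' /\ x * x' = 1) ->
  G n y -> M y -> ~ pw 2 y -> G 1 y.
Proof.
move=> H0 hy hyM hy2; case: n hy => [|[|n]] hy //.
  have hy0 : y != 0 by apply/eqP => e; apply: hy2; rewrite e; apply: ideal0; apply: pw_ideal.
  by have [x' [_ hx']] := H0 y hy hy0; exfalso; apply: (unit_notM hx').
by exfalso; apply: hy2; apply: (@pw_anti 2 n.+2) => //; apply: G3.
Qed.
End Graded.

Lemma NakI K y : ideal K -> (forall k, K k -> exists a r, k = a * y + r /\ prod_ideal M K r) ->
  forall k, K k -> principal y k.
Proof.
move=> hK hJ.
suff: forall n k, K k -> exists a r, k = a * y + r /\ prod_ideal (pw n) K r.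
  move=> h k hk; have [a [r [-> [l [hl ->]]]]] := h T k hk.
  exists a; rewrite big1_seq ?addr0 // => p /andP [_ hp]; have [/Hnil -> _] := hl p hp; by rewrite mul0r.
elim=> [|n IH] k hk.
  by exists 0, k; rewrite mul0r add0r; split => //; rewrite -[k]mul1r; apply: prod_ideal1.
have [a [r [-> [l [hl ->]]]]] := IH k hk.
suff [a' [r' [-> hr']]] : exists a' r', \sum_(p <- l) p.1 * p.2 = a' * y + r' /\ prod_ideal (pw n.+1) K r'.
  by exists (a + a'), r'; rewrite addrA mulrDl; split.
elim: l hl => [|p l IHl] hl.
  by exists 0, 0; rewrite big_nil mul0r addr0; split => //; exact: (ideal0 (prod_ideal_ideal _ hK)).
have [hp1 hp2] := hl p (mem_head _ _).
have [a2 [r2 [e2 [l2 [hl2 e2']]]]] := hJ _ hp2.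
have [a3 [r3 [e3 hr3]]] : exists a' r', \sum_(p <- l) p.1 * p.2 = a' * y + r' /\ prod_ideal (pw n.+1) K r'.
  by apply: IHl => q hq; apply: hl; rewrite inE hq orbT.
exists (p.1 * a2 + a3), (p.1 * r2 + r3); split.
  by rewrite big_cons e3 e2; ring.
apply: (idealD (prod_ideal_ideal _ hK)) => //.
rewrite e2' mulr_sumr; apply: ideal_sum; first exact: prod_ideal_ideal.
move=> q hq; have [hq1 hq2] := hl2 q hq; rewrite mulrA; apply: prod_ideal1 => //.
by rewrite mulrC; apply: pw_S.
Qed.

Lemma core (t : nat) : T = t.+1 ->
  (forall z, ideal_pow M t z <-> principal v z) ->
  (forall (I : nat -> A -> Prop) (d : nat -> A),
     (0 < t)%N ->
     (forall i, (1 <= i <= t)%N -> gorenstein_ideal (I i)) ->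
     (exists z, I 1%N z /\ z <> 0) ->
     (forall i, (1 <= i < t)%N ->
        (forall z, I i z -> I i.+1 z) /\ exists z, I i.+1 z /\ ~ I i z) ->
     (forall z, I t z <-> M z) ->
     v = \prod_(1 <= j < t.+1) d j ->
     (forall i, (1 <= i <= t)%N ->
        forall z, I i z <-> ann_ideal (principal (\prod_(1 <= j < i.+1) d j)) z) ->
     (forall i, (1 <= i <= t)%N ->
        M (d i) /\ ~ ideal_pow M 2 (d i) /\ quot_exponent (I i) (t.+1 - i)) /\
     (exists y, minimal_generator M y /\
        forall z, I 1%N z <-> ann_ideal (principal y) z) /\
     quot_exponent (I 1%N) t) /\
  (forall I : A -> Prop,
     gorenstein_ideal I -> quot_exponent I t ->
     exists y, M y /\ ~ ideal_pow M 2 y /\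
       forall z, ann_ideal I z <-> principal y z) /\
  (forall (G : nat -> A -> Prop) (y : A),
     graded G ->
     (forall x, G 0%N x -> x != 0 -> exists x', G 0%N x' /\ x * x' = 1) ->
     (exists S : A -> Prop, (forall x, S x -> G 1%N x) /\
        forall z, M z <-> gen_by S z) ->
     (exists n, G n y) ->
     minimal_generator M y ->
     quot_exponent (ann_ideal (principal y)) t).
Proof.
move=> hT hpv.
have Hnil' : forall w, pw t.+1 w -> w = 0 by rewrite -hT.
have hvt : pw t v by apply/hpv; exists 1; rewrite mul1r.
split; [|split].
  move=> I d ht hgorI hI1 hchain hIt hv hIp.
  pose p := fun i => \prod_(1 <= j < i.+1) d j.
  have h1t : (1 <= 1 <= t)%N by apply/andP.
  have annP : forall i, (1 <= i <= t)%N -> forall z, I i z <-> z * p i = 0.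
    by move=> i hi z; rewrite hIp //; exact: principal_ann.
  have p1 : p 1%N = d 1%N by rewrite /p big_nat1.
  have pS : forall i, (1 <= i)%N -> p i = p i.-1 * d i.
    by move=> i hi; rewrite /p big_nat_recr //= prednK.
  have dM : forall i, (1 <= i <= t)%N -> M (d i).
    move=> i /andP [hi1 hit]; apply: NNPP => hdM; have [e he] := HMu hdM.
    case: i hi1 hit hdM he => [|[|k]] // _ hit hdM he.
      have [z [hz hz0]] := hI1; have := (annP 1%N h1t z).1 hz; rewrite p1 => hzd.
      by apply: hz0; rewrite -[z]mulr1 -he mulrA hzd mul0r.
    have hk : (1 <= k.+1 < t)%N by apply/andP.
    have hk2 : (1 <= k.+2 <= t)%N by apply/andP.
    have hk1 : (1 <= k.+1 <= t)%N by apply/andP; split => //; apply: ltnW.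
    have [_ [z [hz hnz]]] := hchain k.+1 hk.
    apply: hnz; apply/(annP k.+1 hk1 z).
    have := (annP k.+2 hk2 z).1 hz; rewrite (pS k.+2) //= mulrA => h.
    by rewrite -[_ * _]mulr1 -he mulrA h mul0r.
  have pw_prod : forall k a, (1 <= a)%N -> (a + k <= t.+1)%N -> pw k (\prod_(a <= j < a + k) d j).
    elim=> [|k IH] a ha hak //=.
    rewrite addnS big_nat_recr ?leq_addr //; apply: pw_Sr.
      by apply: IH => //; apply: ltnW; rewrite -addnS.
    apply: dM; apply/andP; split; first exact: leq_trans ha (leq_addr _ _).
    by rewrite -ltnS -addnS.
  have ppw : forall i, (i <= t)%N -> pw i (p i).
    by move=> i hi; have h := pw_prod i 1%N (leqnn 1); rewrite add1n in h; apply: h; rewrite ltnS.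
  pose q := fun i => \prod_(i.+1 <= j < t.+1) d j.
  have qpw : forall i, (i <= t)%N -> pw (t - i) (q i).
    move=> i hi; have h := pw_prod (t - i)%N i.+1 (ltn0Sn i); rewrite addSn subnKC // in h.
    by apply: h; exact: leqnn.
  have vpq : forall i, (i <= t)%N -> v = p i * q i.
    by move=> i hi; rewrite hv /p /q (@big_cat_nat _ _ _ i.+1).
  have H1 : forall i, (1 <= i <= t)%N ->
        M (d i) /\ ~ ideal_pow M 2 (d i) /\ quot_exponent (I i) (t.+1 - i).
    move=> i hi; have [hi1 hit] := andP hi.
    split; first exact: dM.
    split.
      move=> hd2; apply: Hv.
      have e : v = (p i.-1 * q i) * d i by rewrite (vpq i hit) (pS i hi1); ring.
      rewrite e; apply: Hnil'.
      have := pw_mul (pw_mul (ppw i.-1 (leq_trans (leq_pred i) hit)) (qpw i hit)) hd2.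
      by rewrite addn2 -addSn prednK // subnKC.
    have [hIi [hIi1 [B [f [MB [hq _]]]]]] := hgorI i hi.
    apply: (QE hIi hIi1 hq).
      move=> a ha; apply/(annP i hi); apply: Hnil'.
      by have := pw_mul ha (ppw i hit); rewrite subnK // leqW.
    move=> r hr; apply: NNPP => /negP; rewrite -ltnNge => hrt.
    apply: Hv; rewrite (vpq i hit) mulrC; apply/(annP i hi); apply: hr; apply: (pw_anti _ (qpw i hit)).
    by move: hrt; rewrite subSn // ltnS.
  split; first exact: H1.
  split.
    exists (d 1%N); have [hd1 [hd2 _]] := H1 1%N h1t; split; first exact: MG.
    by move=> z; rewrite hIp // big_nat1.
  by have := (H1 1%N h1t).2.2; rewrite subSS subn0.
- move=> I hgI hqe.
  have [hI [hI1 [B [f [MB [hq hgB]]]]]] := hgI.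
  have [_ [hlocB [_ [xB [hxB0 hxB]]]]] := hgB.
  have hMBeq := UMI hI hI1 hq hlocB.
  have [hsurj hker] := hq.
  have [w hw] := hsurj xB.
  have hxBann : ann_ideal MB xB by apply/hxB; exists 1; rewrite mul1r.
  have hsocI : forall a, (forall m, M m -> I (a * m)) -> exists c, I (a - c * w).
    move=> a ha.
    have : principal xB (f a).
      apply/hxB => yb /hMBeq [m [hm <-]]; rewrite -rmorphM; apply/hker; exact: ha.
    move=> [c0 hc0]; have [c hc] := hsurj c0.
    by exists c; apply/hker; rewrite rmorphB rmorphM hc hw hc0 subrr.
  have hwM : forall m, M m -> I (w * m).
    move=> m hm; apply/hker; rewrite rmorphM hw; apply: hxBann; apply/hMBeq; by exists m.
  have hwI : ~ I w.
    by move=> hIw; move: hxB0; rewrite -hw (proj2 (hker w) hIw) eqxx.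
  have [hE1 hE2] := QEinv hI hI1 hqe.
  have [y [hyK hyw]] : exists y, ann_ideal I y /\ w * y <> 0.
    apply: NNPP => hno; apply: hwI; apply: (DA hI) => y hy; apply: NNPP => hne; apply: hno; by exists y.
  pose J := fun z => exists a r, z = a * y + r /\ prod_ideal M (ann_ideal I) r.
  have hP := prod_ideal_ideal M (ann_ideal_ideal I).
  have hJ : ideal J.
    split; [|split].
    - by exists 0, 0; rewrite mul0r addr0; split => //; exact: (ideal0 hP).
    - move=> x1 x2 [a1 [r1 [-> h1]]] [a2 [r2 [-> h2]]]; exists (a1 + a2), (r1 + r2); split; first by ring.
      exact: (idealD hP).
    - move=> c x1 [a1 [r1 [-> h1]]]; exists (c * a1), (c * r1); split; first by ring.
      exact: (idealM hP).
  have hannJ : forall u, ann_ideal J u -> I u.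
    move=> u hu.
    have huy : u * y = 0.
      by apply: hu; exists 1, 0; rewrite mul1r addr0; split => //; exact: (ideal0 hP).
    have [c hc] : exists c, I (u - c * w).
      apply: hsocI => m hm; apply: (DA hI) => k hk.
      by rewrite -mulrA; apply: hu; exists 0, (m * k); rewrite mul0r add0r; split => //; exact: prod_ideal1.
    have hcyw : c * (w * y) = 0.
      have e : c * (w * y) = u * y - y * (u - c * w) by ring.
      by rewrite e huy hyK // subrr.
    have hcM : M c.
      apply: NNPP => hcM; have [c' hc'] := HMu hcM; apply: hyw.
      have : c' * (c * (w * y)) = 0 by rewrite hcyw mulr0.
      by rewrite mulrA [c' * c]mulrC hc' mul1r.
    have -> : u = (u - c * w) + w * c by ring.
    by apply: (idealD hI) => //; exact: hwM.
  have hKJ : forall z, ann_ideal I z -> J z.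
    by move=> z hz; apply: (DA hJ) => u hu; apply: hz; exact: hannJ.
  have hK : forall z, ann_ideal I z <-> principal y z.
    move=> z; split; first by apply: (NakI (ann_ideal_ideal I)) => // k /hKJ.
    by move=> [a ->] x hx; rewrite -mulrA hyK // mulr0.
  have hyM : M y.
    apply: NNPP => hyM; have [y' hy'] := HMu hyM; apply: Hv.
    have hIv : I v by apply: hE1.
    have e : y * v = 0 by apply: hyK.
    by rewrite -[v]mul1r -hy' [y * y']mulrC -mulrA e mulr0.
  exists y; split => //; split => // hy2.
  case: (posnP t) => [ht0|ht1].
    by apply: hI1; apply: hE1; rewrite ht0.
  have h2 : (t.-1 < t)%N by rewrite ltn_predL.
  have hall : forall a, pw t.-1 a -> I a.
    move=> a ha; apply: (DA hI) => k /hK [c ->]; rewrite mulrCA.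
    have := pw_mul ha hy2; rewrite addn2 prednK // => /Hnil' ->.
    by rewrite mulr0.
  have h3 := hE2 _ hall.
  by have := leq_ltn_trans h3 h2; rewrite ltnn.
- move=> G y hG hG0 [S [hS1 hSgen]] [n hyn] hmg.
  have [hyM hy2] := MGinv hmg.
  have hy0 : y <> 0 by move=> e; apply: hy2; rewrite e; apply: ideal0; apply: pw_ideal.
  have hy1 := deg1 hG hS1 hSgen hG0 hyn hyM hy2.
  pose I := ann_ideal (principal y).
  have hI : ideal I := ann_ideal_ideal _.
  have hI1 : ~ I 1 by move/principal_ann; rewrite mul1r.
  have [B [f hq]] := quot_exists hI hI1.
  apply: (QE hI hI1 hq).
    by move=> a ha; apply/principal_ann; apply: Hnil'; rewrite -addn1; apply: pw_mul => //; exact/pw1.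
  move=> r hr; apply: NNPP => /negP; rewrite -ltnNge => hrt.
  have ht1 : (0 < t)%N by apply: leq_ltn_trans hrt.
  have [z [hz hzy]] := GR hG hS1 hSgen Hnil' hvt ht1 hy1 hy0.
  apply: hzy; apply/principal_ann; apply: hr; apply: (pw_anti _ hz).
  by move: hrt; case: (t) => // k; rewrite ltnS.
Qed.
End Loc.

Unset Implicit Arguments.

Theorem proposition3p6 (A : comNzRingType) (M : A -> Prop) (t : nat) (v : A) :
  gorenstein0 M ->
  is_exponent M t.+1 ->
  (forall z, ann_ideal M z <-> ideal_pow M t z) ->
  (forall z, ideal_pow M t z <-> principal v z) ->
  (* (i) *)
  (forall (I : nat -> A -> Prop) (d : nat -> A),
     (0 < t)%N ->
     (forall i, (1 <= i <= t)%N -> gorenstein_ideal (I i)) ->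
     (exists z, I 1%N z /\ z <> 0) ->
     (forall i, (1 <= i < t)%N ->
        (forall z, I i z -> I i.+1 z) /\ exists z, I i.+1 z /\ ~ I i z) ->
     (forall z, I t z <-> M z) ->
     v = \prod_(1 <= j < t.+1) d j ->
     (forall i, (1 <= i <= t)%N ->
        forall z, I i z <-> ann_ideal (principal (\prod_(1 <= j < i.+1) d j)) z) ->
     (forall i, (1 <= i <= t)%N ->
        M (d i) /\ ~ ideal_pow M 2 (d i) /\ quot_exponent (I i) (t.+1 - i)) /\
     (exists y, minimal_generator M y /\
        forall z, I 1%N z <-> ann_ideal (principal y) z) /\
     quot_exponent (I 1%N) t) /\
  (* (ii)(a) *)
  (forall I : A -> Prop,
     gorenstein_ideal I -> quot_exponent I t ->
     exists y, M y /\ ~ ideal_pow M 2 y /\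
       forall z, ann_ideal I z <-> principal y z) /\
  (* (ii)(b) *)
  (forall (G : nat -> A -> Prop) (y : A),
     graded G ->
     (forall x, G 0%N x -> x != 0 -> exists x', G 0%N x' /\ x * x' = 1) ->
     (exists S : A -> Prop, (forall x, S x -> G 1%N x) /\
        forall z, M z <-> gen_by S z) ->
     (exists n, G n y) ->
     minimal_generator M y ->
     quot_exponent (ann_ideal (principal y)) t).
Proof.
move=> hgor hexp hsocT hpowv.
have [hnoeth [[hMi [hM1 hMu]] [_ [x [hx0 hx]]]]] := hgor.
have [hnil _] := hexp.
have Hsoc : forall z, ann_ideal M z <-> principal v z.
  by move=> z; split => h; [apply/hpowv; apply/hsocT | apply/hsocT; apply/hpowv].
have Hv : v <> 0.
  move=> hv0; have : principal v x by apply/Hsoc; apply/hx; exists 1; rewrite mul1r.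
  by move=> [c hc]; move: hx0; rewrite hc hv0 mulr0 eqxx.
exact: (core hMi hM1 hMu hnil Hsoc Hv hnoeth (erefl t.+1) hpowv).
Qed.
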